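(* Let $L, w \in \mathbb{N}$ with $w \ge 1$ and $L \ge w-1$, let $m,n\in\mathbb{N}$, and let $R(x)=\sum_{d=1}^{d_{\max}} R_d x^d$ with $R_d\ge 0$ and $R(1)=1$. In the $(\lambda(x),R(x),L,w)$ spatially coupled LDGM ensemble described below (whose underlying ensemble has $n$ generator nodes and $m$ information bits), the design rate equals $$ r=\frac{mL}{\,n (L - w + 1) + 2n\sum_{i=1}^{w-1} \bigl(1 - R(\tfrac{i}{w})\bigr)}. $$
   Context: Spatially coupled LDGM ensemble: information bits are placed at positions $0,1,\dots,L-1$, with $m$ information bits at each position. Generator nodes are placed at positions $0,1,\dots,L+w-2$, with $n$ generator nodes at each position. Each generator node at position $j$ independently chooses a degree $d$ with probability $R_d$, and each of its $d$ edges independently chooses a position uniformly from $\{j-w+1,\dots,j\}$ and then an information bit (of the $mw$ bits in that window) at that position. Edges whose chosen position lies outside $[0,L-1]$ are omitted (equivalently, they connect to known bits of value $0$). The information-node degree distribution $\lambda(x)$ plays no role in this claim. The design rate is defined as the total number $mL$ of information bits divided by the expected number of generator nodes that are connected to at least one information bit at a position in $[0,L-1]$. *)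

(* Defs.v *)
From mathcomp Require Import all_boot all_order all_algebra.
Set Implicit Arguments. Unset Strict Implicit. Unset Printing Implicit Defensive.
Import Order.TTheory GRing.Theory Num.Theory.
Local Open Scope ring_scope.

(* Positions of information bits: 0..L-1.  Generator positions: 0..L+w-2,
   i.e. j < L + w.-1 (w >= 1).  An edge of a generator node at position j
   chooses an offset k : 'I_w, i.e. the position j - w + 1 + k
   (an integer in {j-w+1,...,j}). *)
Definition in_range (L w j : nat) (k : 'I_w) : bool :=
  (w.-1 <= j + k)%N && (j + k < L + w.-1)%N.

Definition connected_count (L w j d : nat) : nat :=
  #|[set f : {ffun 'I_d -> 'I_w} | [exists i, @in_range L w j (f i)]]|.

Definition prob_connected (K : realFieldType) (L w j d : nat) : K :=
  (connected_count L w j d)%:R / (w ^ d)%:R.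

Definition Rpoly (K : realFieldType) (Rd : nat -> K) (dmax : nat) (x : K) : K :=
  \sum_(1 <= d < dmax.+1) Rd d * x ^+ d.

Definition expected_connected (K : realFieldType) (n L w dmax : nat)
    (Rd : nat -> K) : K :=
  \sum_(j < L + w.-1)
     n%:R * \sum_(1 <= d < dmax.+1) Rd d * prob_connected K L w j d.

Definition design_rate (K : realFieldType) (m n L w dmax : nat)
    (Rd : nat -> K) : K :=
  (m * L)%:R / expected_connected n L w dmax Rd.

(* Main.v *)
Require Import Defs.
From mathcomp Require Import all_boot all_order all_algebra zify ring lra.
Import Order.TTheory GRing.Theory Num.Theory.
Local Open Scope ring_scope.
Set Implicit Arguments.

Definition bad (L w j : nat) : nat := #|[pred k : 'I_w | ~~ in_range L j k]|.

Lemma cc_eq L w j d : connected_count L w j d = (w ^ d - bad L w j ^ d)%N.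
Proof.
rewrite /connected_count /bad.
set A := [set f : {ffun 'I_d -> 'I_w} | _].
have H := cardsC A.
rewrite card_ffun !card_ord in H.
have E : #|~: A| = #|ffun_on_mem 'I_d (mem [pred k : 'I_w | ~~ in_range L j k])|.
  apply: eq_card => f; rewrite !inE negb_exists; apply/forallP/ffun_onP => /= h x.
  - by have := h x.
  - exact: h x.
rewrite E card_ffun_on card_ord in H.
by rewrite -H addnK.
Qed.

Lemma bad_le L w j : (bad L w j <= w)%N.
Proof. by rewrite /bad; apply: leq_trans (max_card _) _; rewrite card_ord. Qed.

Lemma card_interval w a c : (a <= c <= w)%N ->
  #|[pred k : 'I_w | (a <= k < c)%N]| = (c - a)%N.
Proof.
move=> /andP[ac cw].
rewrite -sum1_card big_mkcond /=.
rewrite -(big_mkord xpredT (fun k => if (a <= k < c)%N then 1%N else 0%N)).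
rewrite (@big_cat_nat _ _ _ c 0 w) // (@big_cat_nat _ _ _ a 0 c) //=.
rewrite (@eq_big_nat _ _ _ 0 a _ (fun _ => 0%N)); last by move=> i /andP[_ h]; rewrite leqNgt h.
rewrite (@eq_big_nat _ _ _ a c _ (fun _ => 1%N)); last by move=> i ->.
rewrite (@eq_big_nat _ _ _ c w _ (fun _ => 0%N)); last by move=> i /andP[h _]; rewrite ltnNge h andbF.
rewrite !sum_nat_const_nat; lia.
Qed.

Lemma bad_val L w j : (1 <= w)%N -> (w.-1 <= L)%N -> (j < L + w.-1)%N ->
  bad L w j = if (j < w.-1)%N then (w.-1 - j)%N else if (j < L)%N then 0%N else (j.+1 - L)%N.
Proof.
move=> w1 wL jL; rewrite /bad.
case: ifP => h1; [|case: ifP => h2].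
- rewrite -(subn0 (w.-1 - j)%N) -(@card_interval w); last by apply/andP; lia.
  apply: eq_card => k; rewrite !inE /in_range; have := ltn_ord k.
  move=> ?; apply/idP/idP; lia.
- rewrite -(subnn 0%N) -(@card_interval w 0%N 0%N) //.
  apply: eq_card => k; rewrite !inE /in_range; have := ltn_ord k.
  move=> ?; apply/idP/idP; lia.
- rewrite (_ : (j.+1 - L = w - (L + w.-1 - j))%N); last by lia.
  rewrite -(@card_interval w); last by apply/andP; lia.
  apply: eq_card => k; rewrite !inE /in_range; have := ltn_ord k.
  move=> ?; apply/idP/idP; lia.
Qed.

Lemma prob_eq (K : realFieldType) L w j d : (1 <= w)%N ->
  prob_connected K L w j d = 1 - ((bad L w j)%:R / w%:R) ^+ d.
Proof.
move=> w1; rewrite /prob_connected cc_eq natrB; last first.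
  by elim: d => // d IH; rewrite !expnS leq_mul // bad_le.
have wn0 : (w ^ d)%:R != 0 :> K by rewrite pnatr_eq0 expn_eq0; apply/nandP; left; lia.
by rewrite mulrBl divff // exprMn exprVn !natrX.
Qed.

Definition G {K : realFieldType} (Rd : nat -> K) dmax w (i : nat) : K :=
  1 - Rpoly Rd dmax (i%:R / w%:R).

Lemma inner_eq (K : realFieldType) (Rd : nat -> K) dmax L w j : (1 <= w)%N ->
  Rpoly Rd dmax 1 = 1 ->
  \sum_(1 <= d < dmax.+1) Rd d * prob_connected K L w j d = G Rd dmax w (bad L w j).
Proof.
move=> w1 R1; rewrite /G -{1}R1 /Rpoly -sumrB; apply: eq_bigr => d _.
by rewrite prob_eq // expr1n mulr1 mulrBr mulr1.
Qed.

Lemma G0 (K : realFieldType) (Rd : nat -> K) dmax w : G Rd dmax w 0 = 1.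
Proof.
rewrite /G /Rpoly mul0r big_nat big1 ?subr0 // => d /andP[d1 _].
by rewrite expr0n; case: d d1 => // d _; rewrite mulr0.
Qed.

Theorem lemma1 (K : realFieldType) (L w m n dmax : nat) (Rd : nat -> K) :
  (1 <= w)%N -> (w.-1 <= L)%N ->
  (forall d, (1 <= d <= dmax)%N -> 0 <= Rd d) ->
  Rpoly Rd dmax 1 = 1 ->
  design_rate m n L w dmax Rd =
  (m * L)%:R /
    ((n * (L.+1 - w))%:R
     + 2 * n%:R * \sum_(1 <= i < w) (1 - Rpoly Rd dmax (i%:R / w%:R))).
Proof.
move=> w1 wL _ R1; rewrite /design_rate; congr (_ / _).
rewrite /expected_connected.
rewrite (eq_bigr (fun j : 'I_(L + w.-1) => n%:R * G Rd dmax w (bad L w j))); last first.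
  by move=> j _; rewrite inner_eq.
rewrite -mulr_sumr.
rewrite -(big_mkord xpredT (fun j => G Rd dmax w (bad L w j))).
rewrite (@big_cat_nat _ _ _ L 0 (L + w.-1)) //; last by lia.
rewrite (@big_cat_nat _ _ _ w.-1 0 L) //=.
set S := \sum_(1 <= i < w) _.
have ES : S = \sum_(0 <= i < w.-1) G Rd dmax w i.+1.
  by rewrite /S big_add1.
have P1 : \sum_(0 <= j < w.-1) G Rd dmax w (bad L w j) = S.
  rewrite ES (@eq_big_nat _ _ _ 0 w.-1 _ (fun j => G Rd dmax w (w.-1 - j))); last first.
    by move=> j /andP[_ h]; rewrite bad_val // ?h //; lia.
  rewrite big_nat_rev /=; apply: eq_big_nat => j /andP[_ h]; congr G; lia.
have P2 : \sum_(w.-1 <= j < L) G Rd dmax w (bad L w j) = (L - w.-1)%:R.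
  rewrite (@eq_big_nat _ _ _ w.-1 L _ (fun j => 1)); last first.
    move=> j /andP[h1 h2]; rewrite bad_val //; last by lia.
    by rewrite ltnNge h1 /= h2 G0.
  by rewrite sumr_const_nat.
have P3 : \sum_(L <= j < L + w.-1) G Rd dmax w (bad L w j) = S.
  rewrite -{1}(add0n L) big_addn addKn ES.
  apply: eq_big_nat => j /andP[_ h]; rewrite bad_val //; last by lia.
  rewrite ifN; last by lia.
  rewrite ifN; last by lia.
  congr G; lia.
rewrite P1 P2 P3 /S (_ : (L.+1 - w = L - w.-1)%N); last by lia.
rewrite natrM; ring.
Qed.
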